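(* There is a constant $K_0>1$ such that for every fixed $K\ge K_0$ there is a constant $a=a(K)>0$ with the following property: for all $0<r\le\sqrt2$, setting $d=K\max(r,1/\sqrt2)$, we have $A(d,r)\ge a\,r^5$.
   Context: $B(z,\rho)$ denotes the closed Euclidean ball in $\mathbb{R}^2$. For $x,y\in\mathbb{R}^2$ and $r>0$, $W(x,y;r):=\{z\in\mathbb{R}^2: B(z,r)\supseteq B(x,r)\cap B(y,\|x-y\|)\}$. Its area depends only on $\|x-y\|$ and $r$; $A(d,r)$ denotes the area of $W(x,y;r)$ for any $x,y$ with $\|x-y\|=d$. *)

(* Defs.v *)
From Stdlib Require Import Reals Lra List ZArith.
Open Scope R_scope.

Definition pt := (R * R)%type.

Definition dist2 (p q : pt) : R :=
  sqrt ((fst p - fst q)^2 + (snd p - snd q)^2).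

Definition ball (z : pt) (rho : R) (p : pt) : Prop := dist2 p z <= rho.

Definition W (x y : pt) (r : R) (z : pt) : Prop :=
  forall p : pt, ball x r p -> ball y (dist2 x y) p -> ball z r p.

(* Area: inner Jordan content via closed dyadic grid squares.
   square n (i,j) = [i/2^n,(i+1)/2^n] x [j/2^n,(j+1)/2^n]. *)
Definition square (n : nat) (ij : Z * Z) (p : pt) : Prop :=
  IZR (fst ij) / 2^n <= fst p <= (IZR (fst ij) + 1) / 2^n /\
  IZR (snd ij) / 2^n <= snd p <= (IZR (snd ij) + 1) / 2^n.

Definition inner_approx (S : pt -> Prop) (v : R) : Prop :=
  exists (n : nat) (l : list (Z * Z)),
    NoDup l /\
    Forall (fun ij => forall p : pt, square n ij p -> S p) l /\
    v = INR (length l) / 4^n.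

(* L is the area of S (for S bounded, the least upper bound of the inner
   approximations; equals Lebesgue measure for Jordan-measurable S, in
   particular for compact convex sets such as W(x,y;r)). *)
Definition is_area (S : pt -> Prop) (L : R) : Prop := is_lub (inner_approx S) L.

(* Main.v *)
Require Import Defs.
From Stdlib Require Import Reals Lra List.
From Stdlib Require Import ZArith FinFun Lia Psatz.
Open Scope R_scope.

Lemma sq_ball (p z : pt) rho : 0 <= rho ->
  (fst p - fst z)^2 + (snd p - snd z)^2 <= rho^2 -> ball z rho p.
Proof.
  intros H H1. unfold ball, dist2. rewrite <- (sqrt_pow2 rho H).
  apply sqrt_le_1_alt; exact H1.
Qed.

Lemma ball_sq (p z : pt) rho : ball z rho p ->
  (fst p - fst z)^2 + (snd p - snd z)^2 <= rho^2.
Proof.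
  unfold ball, dist2. intros H.
  set (s := (fst p - fst z)^2 + (snd p - snd z)^2) in *.
  assert (Hs : 0 <= s) by (unfold s; apply Rplus_le_le_0_compat; apply pow2_ge_0).
  pose proof (sqrt_pos s).
  rewrite <- (pow2_sqrt s Hs). nra.
Qed.

Lemma tri a1 a2 b1 b2 r rho : 0 < rho -> rho < r ->
  a1^2 + a2^2 <= (r-rho)^2 -> b1^2 + b2^2 <= rho^2 ->
  (a1+b1)^2 + (a2+b2)^2 <= r^2.
Proof.
  intros H0 H1 Ha Hb.
  assert (Hc : 2*rho*(r-rho)*(a1*b1+a2*b2) <= 2*rho^2*(r-rho)^2).
  { assert (0 <= (rho*a1 - (r-rho)*b1)^2 + (rho*a2-(r-rho)*b2)^2) by (apply Rplus_le_le_0_compat; apply pow2_ge_0).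
    assert (rho^2*(a1^2+a2^2) <= rho^2*(r-rho)^2) by (apply Rmult_le_compat_l; nra).
    assert ((r-rho)^2*(b1^2+b2^2) <= (r-rho)^2*rho^2) by (apply Rmult_le_compat_l; nra).
    nra. }
  assert (Hd : a1*b1+a2*b2 <= rho*(r-rho)).
  { assert (0 < 2*rho*(r-rho)) by nra.
    apply (Rmult_le_reg_l (2*rho*(r-rho))); nra. }
  nra.
Qed.

Lemma disk_in_W x1 x2 y1 y2 d r t rho p1 p2 w1 w2 :
  0 < d -> (y1-x1)^2+(y2-x2)^2 = d^2 -> 0 < r -> 2*r <= d ->
  r^2/(4*d) <= t <= 3*r^2/(4*d) -> rho = 3*r^3/(32*d^2) ->
  (p1-x1)^2+(p2-x2)^2 <= r^2 -> (p1-y1)^2+(p2-y2)^2 <= d^2 ->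
  (w1-(x1+t*(y1-x1)/d))^2 + (w2-(x2+t*(y2-x2)/d))^2 <= rho^2 ->
  (p1-w1)^2+(p2-w2)^2 <= r^2.
Proof.
  intros Hd HD Hr Hrd Ht Hrho Hp Hq Hw.
  set (s := t/d).
  set (a := r^2/(4*d^2)).
  assert (Hs1 : a <= s).
  { unfold a, s. apply (Rmult_le_reg_r d); [lra|].
    replace (r^2/(4*d^2)*d) with (r^2/(4*d)) by (field; lra).
    replace (t/d*d) with t by (field; lra). lra. }
  assert (Hs2 : s <= 3*a).
  { unfold a, s. apply (Rmult_le_reg_r d); [lra|].
    replace (3*(r^2/(4*d^2))*d) with (3*r^2/(4*d)) by (field; lra).
    replace (t/d*d) with t by (field; lra). lra. }
  assert (Hr2 : r^2 = 4*a*d^2) by (unfold a; field; lra).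
  assert (Hrr : 2*r*rho = 3*a^2*d^2).
  { rewrite Hrho. unfold a. field. lra. }
  assert (Ha0 : 0 < a) by (unfold a; apply Rdiv_lt_0_compat; nra).
  assert (Hs1' : s <= 1).
  { assert (4*a*d^2 <= d^2/4) by nra. nra. }
  set (q1 := p1 - x1). set (q2 := p2-x2). set (D1 := y1-x1). set (D2 := y2-x2).
  assert (HqD : q1^2+q2^2 <= 2*(q1*D1+q2*D2)).
  { unfold q1,q2,D1,D2 in *. nra. }
  assert (Hc1 : p1 - (x1 + t*(y1-x1)/d) = q1 - s*D1) by (unfold q1,s,D1; field; lra).
  assert (Hc2 : p2 - (x2 + t*(y2-x2)/d) = q2 - s*D2) by (unfold q2,s,D2; field; lra).
  assert (HE : (p1 - (x1 + t*(y1-x1)/d))^2 + (p2 - (x2 + t*(y2-x2)/d))^2 <= (r-rho)^2).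
  { rewrite Hc1, Hc2.
    assert (E1 : (q1 - s*D1)^2 + (q2-s*D2)^2 = (q1^2+q2^2) - 2*s*(q1*D1+q2*D2) + s^2*d^2).
    { fold D1 D2 in HD. rewrite <- HD. ring. }
    rewrite E1.
    assert (q1^2+q2^2 <= r^2) by (unfold q1, q2; lra).
    assert (0 <= s) by lra.
    assert (2*s*(q1*D1+q2*D2) >= s*(q1^2+q2^2)) by nra.
    assert ((1-s)*(q1^2+q2^2) <= (1-s)*r^2) by (apply Rmult_le_compat_l; lra).
    assert ((s-a)*(s-3*a) <= 0) by nra.
    assert (0 <= rho^2) by nra.
    replace ((r-rho)^2) with (r^2 - 2*r*rho + rho^2) by ring.
    rewrite Hrr. nra. }
  assert (Hrho0 : 0 < rho).
  { rewrite Hrho. pose proof (pow_lt r 3 Hr). apply Rdiv_lt_0_compat; nra. }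
  assert (Hrhor : rho < r).
  { rewrite Hrho. pose proof (pow_lt r 3 Hr). apply (Rmult_lt_reg_r (32*d^2)); [nra|].
    replace (3*r^3/(32*d^2)*(32*d^2)) with (3*r^3) by (field; lra). nra. }
  replace (p1 - w1) with ((p1 - (x1 + t*(y1-x1)/d)) + ((x1 + t*(y1-x1)/d) - w1)) by ring.
  replace (p2 - w2) with ((p2 - (x2 + t*(y2-x2)/d)) + ((x2 + t*(y2-x2)/d) - w2)) by ring.
  apply (tri _ _ _ _ r rho); try lra.
Qed.

Definition fl (z : R) : Z := (up z - 1)%Z.

Lemma fl_spec z : IZR (fl z) <= z < IZR (fl z) + 1.
Proof.
  unfold fl. rewrite minus_IZR. destruct (archimed z). simpl. lra.
Qed.

Lemma fl_eq a b : fl a = fl b -> (a - b)^2 < 1.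
Proof.
  intros H. pose proof (fl_spec a). pose proof (fl_spec b). rewrite H in *.
  assert (-1 < a - b < 1) by lra. nra.
Qed.

Lemma in_cell i z q P : 0 < P -> IZR i / P <= q <= (IZR i + 1)/P ->
  IZR i <= z*P < IZR i + 1 -> (q - z)^2 * P^2 <= 1.
Proof.
  intros HP [H1 H2] H3.
  assert (IZR i <= q * P).
  { apply (Rmult_le_reg_r (/P)). apply Rinv_0_lt_compat; lra.
    replace (q*P*/P) with q by (field; lra). exact H1. }
  assert (q * P <= IZR i + 1).
  { apply (Rmult_le_reg_r (/P)). apply Rinv_0_lt_compat; lra.
    replace (q*P*/P) with q by (field; lra). exact H2. }
  replace ((q-z)^2*P^2) with ((q*P - z*P)^2) by ring.
  assert (-1 <= q*P - z*P <= 1) by lra. nra.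
Qed.

Lemma pow2_ge n : INR n <= 2^n.
Proof.
  induction n. simpl; lra. rewrite S_INR. simpl.
  assert (1 <= 2^n) by (apply pow_R1_Rle; lra). lra.
Qed.

Lemma exists_n rho : 0 < rho <= 2 -> exists n, 2 <= rho * 2^n < 4.
Proof.
  intros Hr.
  assert (HN : exists N, 2 <= rho * 2^N).
  { destruct (archimed (2/rho)) as [Ha _].
    exists (Z.to_nat (up (2/rho))).
    assert (0 <= up (2/rho))%Z.
    { apply le_IZR. assert (0 < 2/rho) by (apply Rdiv_lt_0_compat; lra). lra. }
    pose proof (pow2_ge (Z.to_nat (up (2/rho)))).
    rewrite INR_IZR_INZ, Z2Nat.id in H0 by lia.
    assert (2/rho <= 2^(Z.to_nat (up (2 / rho)))) by lra.
    apply (Rmult_le_compat_l rho) in H1; [|lra].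
    replace (rho*(2/rho)) with 2 in H1 by (field; lra). lra. }
  destruct HN as [N HN]. induction N.
  - exists 0%nat. simpl in *. lra.
  - destruct (Rle_lt_dec 2 (rho * 2^N)) as [h|h].
    + apply IHN; exact h.
    + exists (S N). simpl in *. replace (rho*(2*2^N)) with (2*(rho*2^N)) in * by ring. lra.
Qed.

Lemma exists_M X : 0 <= X -> exists M : nat, X - 1 < INR M <= X.
Proof.
  intros HX. pose proof (fl_spec X).
  assert (-1 < fl X)%Z by (apply lt_IZR; lra). assert (0 <= fl X)%Z by lia.
  exists (Z.to_nat (fl X)). rewrite INR_IZR_INZ, Z2Nat.id by lia. lra.
Qed.

Theorem mainTheorem11 :
  exists K0 : R, K0 > 1 /\
  forall K : R, K >= K0 ->
  exists a : R, a > 0 /\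
  forall r : R, 0 < r -> r <= sqrt 2 ->
  forall x y : pt, dist2 x y = K * Rmax r (1 / sqrt 2) ->
  forall L : R, is_area (W x y r) L -> L >= a * r ^ 5.
Proof.
  exists 2. split; [lra|]. intros K HK.
  assert (HK3 : 0 < K^3) by (apply pow_lt; lra).
  exists (1/(4096*K^3)). split. { apply Rdiv_lt_0_compat; lra. }
  intros r Hr Hr2 [x1 x2] [y1 y2] Hd L HL.
  set (d := dist2 (x1,x2) (y1,y2)) in *.
  assert (Hs2 : 0 < sqrt 2) by (apply sqrt_lt_R0; lra).
  assert (Hss : sqrt 2 * sqrt 2 = 2) by (apply sqrt_sqrt; lra).
  assert (Hm1 : r <= Rmax r (1/sqrt 2)) by apply Rmax_l.
  assert (Hm2 : 1/sqrt 2 <= Rmax r (1/sqrt 2)) by apply Rmax_r.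
  assert (Hm3 : Rmax r (1/sqrt 2) <= sqrt 2).
  { apply Rmax_lub; [lra|]. apply (Rmult_le_reg_r (sqrt 2)); [lra|].
    replace (1/sqrt 2 * sqrt 2) with 1 by (field; lra). lra. }
  set (m := Rmax r (1/sqrt 2)) in *.
  assert (Hm0 : 0 < m) by lra.
  assert (Hdr : 2*r <= d).
  { rewrite Hd. assert (0 <= (K-2)*m) by (apply Rmult_le_pos; lra). nra. }
  assert (Hd0 : 0 < d) by lra.
  assert (Hd2 : d^2 <= 2*K^2).
  { rewrite Hd. assert (m*m <= sqrt 2 * sqrt 2) by (apply Rmult_le_compat; lra). nra. }
  assert (Hd15 : d <= 3/2*K) by nra.
  assert (Hd3 : d^3 <= 3*K^3) by nra.
  assert (HD : (y1-x1)^2+(y2-x2)^2 = d^2).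
  { unfold d, dist2. cbn [fst snd]. rewrite pow2_sqrt.
    ring. apply Rplus_le_le_0_compat; apply pow2_ge_0. }
  assert (Hr3 : 0 < r^3) by (apply pow_lt; lra).
  set (rho := 3*r^3/(32*d^2)).
  assert (Hrho0 : 0 < rho) by (unfold rho; apply Rdiv_lt_0_compat; nra).
  assert (Hrho2 : rho <= 2).
  { unfold rho. apply (Rmult_le_reg_r (32*d^2)); [nra|].
    replace (3*r^3/(32*d^2)*(32*d^2)) with (3*r^3) by (field; lra).
    assert (r <= 2) by nra. assert (r^3 <= 2*r^2) by (replace (r^3) with (r*r^2) by ring; nra). nra. }
  destruct (exists_n rho (conj Hrho0 Hrho2)) as [n [Hn1 Hn2]].
  set (P := 2^n) in *.
  assert (HP : 0 < P) by (unfold P; apply pow_lt; lra).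
  set (X := 8*d/(3*r)).
  assert (HX : 16/3 <= X).
  { unfold X. apply (Rmult_le_reg_r (3*r)); [lra|].
    replace (8*d/(3*r)*(3*r)) with (8*d) by (field; lra). lra. }
  destruct (exists_M X) as [M [HM1 HM2]]; [lra|].
  set (tk := fun k : nat => r^2/(4*d) + 2*rho*INR k).
  set (c1 := fun k => x1 + tk k * (y1-x1)/d).
  set (c2 := fun k => x2 + tk k * (y2-x2)/d).
  set (f := fun k => (fl (c1 k * P), fl (c2 k * P))).
  assert (Hinj : Injective f).
  { intros k l Hkl. unfold f in Hkl. injection Hkl as E1 E2.
    apply fl_eq in E1. apply fl_eq in E2.
    destruct (Nat.eq_dec k l) as [|Hne]; [assumption|exfalso].
    assert (Hkl2 : 1 <= (INR k - INR l)^2).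
    { assert (h0 : (k < l \/ l < k)%nat) by lia. destruct h0 as [h|h].
      - assert (INR k + 1 <= INR l) by (rewrite <- S_INR; apply le_INR; lia). nra.
      - assert (INR l + 1 <= INR k) by (rewrite <- S_INR; apply le_INR; lia). nra. }
    assert (Hsum : (c1 k * P - c1 l * P)^2 + (c2 k * P - c2 l * P)^2
                   = 4*rho^2*(INR k - INR l)^2 * P^2).
    { unfold c1, c2, tk.
      transitivity (4*rho^2*(INR k - INR l)^2 * P^2 * (((y1-x1)^2+(y2-x2)^2)/d^2)).
      - field. lra.
      - rewrite HD. field. lra. }
    assert (4 <= rho^2*P^2) by nra.
    nra. }
  assert (Happ : inner_approx (W (x1,x2) (y1,y2) r) (INR M / 4^n)).
  { exists n, (map f (seq 0 M)). split; [|split].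
    - apply Injective_map_NoDup; [exact Hinj|apply seq_NoDup].
    - apply Forall_forall. intros ij Hij.
      apply in_map_iff in Hij. destruct Hij as [k [Hk Hin]].
      apply in_seq in Hin. subst ij.
      intros [w1 w2] Hsq. unfold square in Hsq. cbn [fst snd] in Hsq. fold P in Hsq.
      destruct Hsq as [Hq1 Hq2].
      pose proof (in_cell _ _ _ _ HP Hq1 (fl_spec _)) as G1.
      pose proof (in_cell _ _ _ _ HP Hq2 (fl_spec _)) as G2.
      intros [p1 p2] Hb1 Hb2.
      apply ball_sq in Hb1. apply ball_sq in Hb2. fold d in Hb2. cbn [fst snd] in Hb1, Hb2.
      apply sq_ball; [lra|]. cbn [fst snd].
      assert (HkM : INR k <= INR M) by (apply le_INR; lia).
      assert (Hk0 : 0 <= INR k) by apply pos_INR.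
      assert (Ht : r^2/(4*d) <= tk k <= 3*r^2/(4*d)).
      { unfold tk. split; [nra|].
        assert (2*rho*INR M <= r^2/(2*d)).
        { unfold rho. unfold X in HM2.
          assert (0 < d^2) by (apply pow_lt; lra).
          apply (Rmult_le_reg_r (32*d^2*(3*r))); [apply Rmult_lt_0_compat; lra|].
          replace (2*(3*r^3/(32*d^2))*INR M*(32*d^2*(3*r))) with (18*r^4*INR M) by (field; lra).
          replace (r^2/(2*d)*(32*d^2*(3*r))) with (48*r^3*d) by (field; lra).
          apply (Rmult_le_compat_r (3*r)) in HM2; [|lra].
          replace (8*d/(3*r)*(3*r)) with (8*d) in HM2 by (field; lra).
          assert (0 < 6*r^3) by lra. nra. }
        replace (3*r^2/(4*d)) with (r^2/(4*d) + r^2/(2*d)) by (field; lra). nra. }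
      assert ((w1 - c1 k)^2 + (w2 - c2 k)^2 <= rho^2).
        { assert (HP2 : 0 < P^2) by nra.
          assert (((w1 - c1 k)^2 + (w2 - c2 k)^2) * P^2 <= rho^2 * P^2) by nra.
          apply Rmult_le_reg_r in H; lra. }
      unfold c1, c2 in H.
      exact (disk_in_W x1 x2 y1 y2 d r (tk k) rho p1 p2 w1 w2 Hd0 HD Hr Hdr Ht eq_refl Hb1 Hb2 H).
    - rewrite length_map, length_seq. reflexivity. }
  destruct HL as [Hub _].
  apply Hub in Happ.
  apply Rle_ge. eapply Rle_trans; [|exact Happ].
  replace (4^n) with (P^2) by (unfold P; replace 4 with (2*2) by lra; rewrite Rpow_mult_distr; ring).
  assert (HP2 : 0 < P^2) by nra.
  assert (HMX : X/2 <= INR M) by lra.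
  apply (Rmult_le_reg_r (P^2)); [lra|].
  replace (INR M / P^2 * P^2) with (INR M) by (field; lra).
  assert (HPr : P^2 * rho^2 < 16).
  { replace (P^2*rho^2) with ((rho*P)^2) by ring. nra. }
  set (A := 1/(4096*K^3) * r^5).
  assert (Hr5 : 0 < r^5) by (apply pow_lt; lra).
  assert (HA : 0 < A) by (unfold A; apply Rmult_lt_0_compat; [apply Rdiv_lt_0_compat|]; lra).
  assert (Hd3p : 0 < d^3) by (apply pow_lt; lra).
  assert (E1 : rho^2 * (X/2) = 3*r^5/(256*d^3)).
  { unfold rho, X. field. lra. }
  assert (E2 : A * 16 = r^5/(256*K^3)).
  { unfold A. field. lra. }
  assert (H1 : A * 16 <= rho^2*(X/2)).
  { rewrite E1, E2.
    replace (r^5/(256*K^3)) with (r^5 * /(256*K^3)) by (field; lra).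
    replace (3*r^5/(256*d^3)) with (r^5 * (3*/(256*d^3))) by (field; lra).
    apply Rmult_le_compat_l; [lra|].
    apply (Rmult_le_reg_l (256*K^3 * (256*d^3))); [nra|].
    replace (256*K^3*(256*d^3) * /(256*K^3)) with (256*d^3) by (field; lra).
    replace (256*K^3*(256*d^3) * (3*/(256*d^3))) with (3*256*K^3) by (field; lra).
    lra. }
  assert (H2 : A * P^2 * rho^2 <= A*16).
  { replace (A*P^2*rho^2) with (A*(P^2*rho^2)) by ring.
    apply Rmult_le_compat_l; lra. }
  assert (H3 : A * P^2 <= X/2).
  { assert (0 < rho^2) by (apply pow_lt; lra).
    apply (Rmult_le_reg_r (rho^2)); [lra|]. lra. }
  lra.
Qed.
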